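(* Let $(V,E)$ be a finite graph and $p\in(0,1)$. Assume that there exists a vertex $\bar x\in V$ which belongs to at least four edges, and that there exists a spin configuration $\bar\sigma\in\{-1,1\}^V$ with $\delta_{\bar\sigma}(e)=0$ for every $e\in E$. Let $(\eta_t,\sigma_t)_{t\ge0}$ be a continuous-time Markov jump process on $\{0,1\}^E\times\{-1,1\}^V$ with rates $q$ satisfying $q((\eta,\sigma),(\eta',\sigma'))\ge0$ for $(\eta,\sigma)\ne(\eta',\sigma')$, $\sum_{(\eta',\sigma')}q((\eta,\sigma),(\eta',\sigma'))=0$ for all $(\eta,\sigma)$, and the detailed balance equation $IP(\eta,\sigma)q((\eta,\sigma),(\eta',\sigma'))=IP(\eta',\sigma')q((\eta',\sigma'),(\eta,\sigma))$ for all pairs of states. If the spin marginal $(\sigma_t)_{t\ge0}$ is a Markov jump process with transition rates $c(\sigma,\sigma')$ satisfying $c(\sigma,\sigma')=0$ whenever $\sigma,\sigma'$ differ at two or more vertices, $c(\sigma,\sigma^x)>0$ for all $x\in V$, and $c(\sigma,\sigma)=-\sum_{y\in V}c(\sigma,\sigma^y)$, then the edge marginal $(\eta_t)_{t\ge0}$ is not a Markov jump process.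
   Context: $(V,E)$ is a finite graph with unoriented edges, $E$ a set of pairs of distinct vertices. Edge configurations $\eta\in\{0,1\}^E$, spin configurations $\sigma\in\{-1,1\}^V$. For $e=\langle x,y\rangle$, $\delta_\sigma(e)=\mathbf 1_{\sigma(x)=\sigma(y)}$. $IP(\eta,\sigma)=\frac1Z\prod_{e\in E}\big(p\mathbf 1_{\eta(e)=1}\delta_\sigma(e)+(1-p)\mathbf 1_{\eta(e)=0}\big)$ with $Z$ the normalizing constant. $\sigma^x$ is $\sigma$ with the spin at $x$ flipped. A marginal process is a Markov jump process if it is a time-homogeneous Markov process for every initial distribution, with transition rates not depending on the initial distribution. *)

(* Defs.v *)
From HB Require Import structures.
From mathcomp Require Import all_boot all_order all_algebra.
From mathcomp Require Import all_classical all_reals all_analysis.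
Set Implicit Arguments. Unset Strict Implicit. Unset Printing Implicit Defensive.
Import Order.TTheory GRing.Theory Num.Theory.
Local Open Scope ring_scope.

Section Defs.
Variable R : realType.

Section Chain.
Variable S : finType.

Definition is_rate_matrix (Q : S -> S -> R) : Prop :=
  (forall x y, x != y -> 0 <= Q x y) /\ (forall x, \sum_(y : S) Q x y = 0).

Fixpoint rpow (Q : S -> S -> R) (k : nat) : S -> S -> R :=
  match k with
  | 0 => fun x y => if x == y then 1 else 0
  | k'.+1 => fun x y => \sum_(z : S) rpow Q k' x z * Q z y
  end.

(* transition function P_t = exp(t Q), entrywise as the exponential series *)
Definition trans (Q : S -> S -> R) (t : R) (x y : S) : R :=
  limn (fun N : nat => \sum_(k < N) (t ^+ k / (k`!)%:R) * rpow Q k x y).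

Definition is_distr (mu : S -> R) : Prop :=
  (forall x, 0 <= mu x) /\ \sum_(x : S) mu x = 1.

(* probability, for the chain started at x at time 0, of visiting the
   states of l at the successive times given by the nonnegative increments *)
Fixpoint path_prob (Q : S -> S -> R) (x : S) (l : seq (R * S)) : R :=
  match l with
  | [::] => 1
  | (d, y) :: l' => trans Q d x y * path_prob Q y l'
  end.
End Chain.

(* probability, for the chain with rates Q started at x, that the image
   under f of the chain takes the values of l at the successive times *)
Fixpoint marg_path_prob (S T : finType) (f : S -> T) (Q : S -> S -> R)
    (x : S) (l : seq (R * T)) : R :=
  match l with
  | [::] => 1
  | (d, y) :: l' =>
      \sum_(x' : S | f x' == y) trans Q d x x' * marg_path_prob f Q x' l'
  end.

(* The marginal f(X_t) of the Markov jump process X with rates Q is a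
   (time-homogeneous) Markov jump process with transition rates c, for every
   initial distribution mu: all finite-dimensional distributions of f(X)
   (at times 0 = t_0 <= t_1 <= ... <= t_n, given by increments d_i >= 0)
   coincide with those of the Markov chain with rates c and initial law the
   image of mu. *)
Definition marginal_MJP_with_rates (S T : finType) (Q : S -> S -> R)
    (f : S -> T) (c : T -> T -> R) : Prop :=
  is_rate_matrix c /\
  forall (mu : S -> R), is_distr mu ->
  forall (y0 : T) (l : seq (R * T)), all (fun p => 0 <= p.1) l ->
    \sum_(x : S | f x == y0) mu x * marg_path_prob f Q x l
    = (\sum_(x : S | f x == y0) mu x) * path_prob c y0 l.

Definition marginal_is_MJP (S T : finType) (Q : S -> S -> R) (f : S -> T)
  : Prop := exists c : T -> T -> R, marginal_MJP_with_rates Q f c.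

Definition simple_graph (V Ed : finType) (ends : Ed -> V * V) : Prop :=
  (forall e, (ends e).1 != (ends e).2) /\
  (forall e e', (ends e = ends e' \/ ends e = ((ends e').2, (ends e').1)) ->
     e = e').

(* spins: true = +1, false = -1 *)
Definition spin (V : finType) := {ffun V -> bool}.
Definition edgeconf (Ed : finType) := {ffun Ed -> bool}.

Definition delta (V Ed : finType) (ends : Ed -> V * V) (s : spin V) (e : Ed)
  : bool := s (ends e).1 == s (ends e).2.

Definition flip (V : finType) (s : spin V) (x : V) : spin V :=
  [ffun y => if y == x then ~~ s y else s y].

Definition IP_weight (V Ed : finType) (ends : Ed -> V * V) (p : R)
    (st : edgeconf Ed * spin V) : R :=
  \prod_(e : Ed) (p * ((st.1 e && delta ends st.2 e) : bool)%:R
                  + (1 - p) * ((~~ st.1 e) : bool)%:R).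

Definition IP (V Ed : finType) (ends : Ed -> V * V) (p : R)
    (st : edgeconf Ed * spin V) : R :=
  IP_weight ends p st / \sum_(st' : edgeconf Ed * spin V) IP_weight ends p st'.

End Defs.

(* Main.v *)
Require Import Defs.
From HB Require Import structures.
From mathcomp Require Import all_boot all_order all_algebra.
From mathcomp Require Import all_classical all_reals all_analysis.
From mathcomp Require Import ring lra.
Import Order.TTheory GRing.Theory Num.Theory numFieldNormedType.Exports.
Local Open Scope ring_scope.

Section Ana.
Variable R : realType.
Variable S : finType.
Implicit Types Q : S -> S -> R.

Definition bnd Q : R := 1 + \sum_(a : S) \sum_(b : S) `|Q a b|.

Lemma bnd_ge1 Q : 1 <= bnd Q.
Proof. by rewrite /bnd lerDl; apply: sumr_ge0 => a _; apply: sumr_ge0. Qed.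

Lemma col_le Q y : \sum_(z : S) `|Q z y| <= bnd Q.
Proof.
rewrite /bnd; apply: (@le_trans _ _ (\sum_(a : S) \sum_(b : S) `|Q a b|)); last by rewrite lerDr.
apply: ler_sum => z _; rewrite (bigD1 y) //= lerDl; exact: sumr_ge0.
Qed.

Lemma rpow_bound Q k x y : `|rpow Q k x y| <= bnd Q ^+ k.
Proof.
elim: k y => [|k IH] y /=.
  by rewrite expr0; case: (x == y); rewrite ?normr1 ?normr0.
apply: le_trans (ler_norm_sum _ _ _) _.
apply: le_trans (_ : \sum_z bnd Q ^+ k * `|Q z y| <= _).
  apply: ler_sum => z _; rewrite normrM; apply: ler_wpM2r => //.
by rewrite -mulr_sumr exprS mulrC ler_wpM2r ?col_le // exprn_ge0 // (le_trans ler01 (bnd_ge1 Q)).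
Qed.

Lemma bnd_ge0 Q : 0 <= bnd Q.
Proof. exact: le_trans ler01 (bnd_ge1 Q). Qed.

Lemma term_bound Q t x y j k : 0 <= t <= 1 ->
  `|t ^+ j / (k`!)%:R * rpow Q k x y| <= exp_coeff (bnd Q) k.
Proof.
move=> /andP[t0 t1].
rewrite normrM ger0_norm ?divr_ge0 ?exprn_ge0 // /exp_coeff /= mulrAC.
apply: ler_wpM2r; first by rewrite invr_ge0.
rewrite -[X in _ <= X]mul1r; apply: ler_pM => //; first by rewrite exprn_ge0.
  exact: exprn_ile1.
exact: rpow_bound.
Qed.

Lemma trans_est Q t x y : 0 <= t <= 1 ->
  `|trans Q t x y - ((x == y)%:R + t * Q x y)|
     <= t ^+ 2 * limn (series (exp_coeff (bnd Q))).
Proof.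
move=> tb; have /andP[t0 t1] := tb.
set M := bnd Q; set B := limn (series (exp_coeff M)).
pose a := fun k : nat => t ^+ k / (k`!)%:R * rpow Q k x y.
have transE : trans Q t x y = limn (series a).
  rewrite /trans.
  have -> : (fun N : nat => \sum_(k < N) (t ^+ k / (k`!)%:R) * rpow Q k x y) = series a.
    by apply/funext => N; rewrite /series /= big_mkord.
  by [].
have cE : cvgn (series (exp_coeff M)) := is_cvg_series_exp_coeff M.
have ca : cvgn (series a).
  apply: normed_cvg; apply: (@series_le_cvg _ _ (exp_coeff M)) => //.
  - by move=> n /=; apply: normr_ge0.
  - by move=> n; apply: exp_coeff_ge0; apply: bnd_ge0.
  - by move=> n /=; apply: term_bound.
have key : forall n, `|series a n.+2 - ((x == y)%:R + t * Q x y)| <= t ^+ 2 * B.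
  move=> n; rewrite /series /= big_mkord 2!big_ord_recl /=.
  have a0 : a 0%N = (x == y)%:R.
    by rewrite /a /= expr0 fact0 divr1 mul1r; case: (x == y).
  have a1 : a 1%N = t * Q x y.
    rewrite /a /= expr1 divr1; congr (_ * _).
    rewrite (bigD1 x) //= eqxx mul1r big1 ?addr0 // => z /negbTE.
    by rewrite eq_sym => ->; rewrite mul0r.
  rewrite a0 a1.
  have -> : forall u v w : R, u + (v + w) - (u + v) = w by move=> u v w; ring.
  apply: le_trans (ler_norm_sum _ _ _) _.
  have hk : forall k, (2 <= k)%N -> `|a k| <= t ^+ 2 * exp_coeff M k.
    case=> [|[|k]] // _.
    have -> : a k.+2 = t ^+ 2 * (t ^+ k / (k.+2)`!%:R * rpow Q k.+2 x y).
      by rewrite /a !exprS; ring.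
    rewrite normrM ger0_norm ?exprn_ge0 //.
    apply: ler_wpM2l; first by rewrite exprn_ge0.
    by apply: term_bound.
  apply: (@le_trans _ _ (\sum_(i < n) t ^+ 2 * exp_coeff M (bump 0 (bump 0 i)))).
    by apply: ler_sum => i _; apply: hk; rewrite /bump.
  rewrite -mulr_sumr; apply: ler_wpM2l; first by rewrite exprn_ge0.
  apply: (@le_trans _ _ (series (exp_coeff M) n.+2)).
    rewrite /series /= big_mkord 2!big_ord_recl /= addrA lerDr.
    by apply: addr_ge0; apply: exp_coeff_ge0; apply: bnd_ge0.
  apply: nondecreasing_cvgn_le => //.
  apply: nondecreasing_series => k _ _; apply: exp_coeff_ge0; apply: bnd_ge0.
rewrite transE ler_distl; apply/andP; split.
  apply: limr_ge => //; exists 2%N => // n /= Hn.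
  case: n Hn => [|[|m]] // _.
  by have := key m; rewrite ler_distl => /andP[].
apply: limr_le => //; exists 2%N => // n /= Hn.
case: n Hn => [|[|m]] // _.
by have := key m; rewrite ler_distl => /andP[].
Qed.
End Ana.
Arguments bnd {R S}.
Arguments trans_est {R S}.

Section Gen.
Variable R : realType.

Lemma small_zero (D K : R) : (forall t, 0 < t <= 1 -> `|D| <= K * t) -> D = 0.
Proof.
move=> H; apply/eqP; apply/negP => /negP Dn0.
have d0 : 0 < `|D| by rewrite normr_gt0.
set d := `|D| in d0 H.
have k0 : 0 < `|K| + 1 by apply: ltr_pwDr => //.
set s := d / (`|K| + 1).
have s0 : 0 < s by rewrite /s divr_gt0.
have hs : s * (`|K| + 1) = d by rewrite /s mulfVK // gt_eqF.
have kK : K <= `|K| := ler_norm K.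
have kp : 0 <= `|K| := normr_ge0 K.
have [s1|s1] := leP s 1.
  have := H s; rewrite s0 s1 => /(_ isT) => h.
  nra.
have := H 1; rewrite ltr01 lexx => /(_ isT) => h.
nra.
Qed.

Lemma gen_lump (S T : finType) (Q : S -> S -> R) (f : S -> T) (c : T -> T -> R) :
  marginal_MJP_with_rates Q f c -> forall x y, y != f x ->
  \sum_(x' | f x' == y) Q x x' = c (f x) y.
Proof.
move=> [_ H] x y yx.
pose mu := fun z : S => (z == x)%:R : R.
have dmu : is_distr mu.
  split => [z|]; first by rewrite /mu ler0n.
  rewrite (bigD1 x) //= /mu eqxx big1 ?addr0 // => z /negbTE ->; done.
have hF : forall F : S -> R, \sum_(z | f z == f x) mu z * F z = F x.
  move=> F; rewrite (bigD1 x) //= /mu eqxx mul1r big1 ?addr0 //.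
  by move=> z /andP[_ /negbTE ->]; rewrite mul0r.
have h1 : \sum_(z | f z == f x) mu z = 1.
  rewrite (bigD1 x) //= /mu eqxx big1 ?addr0 //.
  by move=> z /andP[_ /negbTE ->].
have Ht : forall t, 0 <= t ->
    \sum_(x' | f x' == y) trans Q t x x' = trans c t (f x) y.
  move=> t t0; have := H mu dmu (f x) [:: (t, y)]; rewrite /= andbT => /(_ t0).
  rewrite hF h1 mul1r mulr1 => <-.
  by apply: eq_bigr => z _; rewrite mulr1.
have dP : \sum_(x' | f x' == y) (x == x')%:R = 0 :> R.
  apply: big1 => z /eqP fz; case: eqP => // xz; subst z.
  by rewrite fz eqxx in yx.
have fxy : (f x == y) = false by apply/negbTE; rewrite eq_sym.
set CQ := limn (series (exp_coeff (bnd Q))).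
set Cc := limn (series (exp_coeff (bnd c))).
apply/eqP; rewrite -subr_eq0; apply/eqP.
apply: (@small_zero _ ((\sum_(x' | f x' == y) CQ) + Cc)) => t /andP[t0 t1].
have tb : 0 <= t <= 1 by rewrite ltW.
have E : t * (\sum_(x' | f x' == y) Q x x' - c (f x) y) =
   (trans c t (f x) y - ((f x == y)%:R + t * c (f x) y))
   - \sum_(x' | f x' == y) (trans Q t x x' - ((x == x')%:R + t * Q x x')).
  rewrite sumrB big_split /= dP -mulr_sumr Ht ?ltW // fxy /= !add0r.
  by rewrite mulrBr opprB [RHS]addrC addrA subrK.
have : `|t * (\sum_(x' | f x' == y) Q x x' - c (f x) y)| <=
   t ^+ 2 * ((\sum_(x' | f x' == y) CQ) + Cc).
  rewrite E; apply: le_trans (ler_normB _ _) _.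
  rewrite mulrDr [X in _ <= X]addrC mulr_sumr; apply: lerD; first exact: trans_est.
  apply: le_trans (ler_norm_sum _ _ _) _.
  by apply: ler_sum => z _; apply: trans_est.
rewrite normrM gtr0_norm // expr2 -mulrA.
by rewrite ler_pM2l // mulrC.
Qed.
End Gen.
Section IPfacts.
Variables (R : realType) (V Ed : finType) (ends : Ed -> V * V) (p : R).
Hypothesis hp : 0 < p < 1.

Definition comp (st : edgeconf Ed * spin V) : bool :=
  [forall e, st.1 e ==> delta ends st.2 e].

Lemma IPw_pos st : comp st -> 0 < IP_weight ends p st.
Proof.
move=> /forallP H; apply: prodr_gt0 => e _.
have /andP[p0 p1] := hp.
move: (H e); case: (st.1 e) => /= [->|_]; rewrite ?mulr1 ?mulr0 ?addr0 ?add0r //.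
by rewrite subr_gt0.
Qed.

Lemma IPw_ge0 st : 0 <= IP_weight ends p st.
Proof.
have /andP[p0 p1] := hp.
apply: prodr_ge0 => e _; apply: addr_ge0; apply: mulr_ge0 => //; rewrite ?ler0n //.
  exact: ltW.
by rewrite subr_ge0 ltW.
Qed.

Lemma IPw_0 st : ~~ comp st -> IP_weight ends p st = 0.
Proof.
move=> /forallPn [e]; rewrite negb_imply => /andP[h1 h2].
rewrite /IP_weight (bigD1 e) //= h1 (negbTE h2) /= mulr0 mulr0 addr0 mul0r //.
Qed.

Lemma Z_pos (s : spin V) : 0 < \sum_(st' : edgeconf Ed * spin V) IP_weight ends p st'.
Proof.
rewrite (bigD1 ([ffun _ => false], s)) //=.
apply: ltr_pwDl; last by apply: sumr_ge0 => i _; apply: IPw_ge0.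
apply: IPw_pos; apply/forallP => e /=; by rewrite ffunE.
Qed.

Lemma IP_pos (s : spin V) st : comp st -> 0 < IP ends p st.
Proof. by move=> h; rewrite /IP divr_gt0 ?IPw_pos ?(Z_pos s). Qed.

Lemma IP_0 st : ~~ comp st -> IP ends p st = 0.
Proof. by move=> h; rewrite /IP IPw_0 ?mul0r. Qed.
End IPfacts.
Arguments comp {V Ed}.
Arguments IP_0 {R V Ed ends p st}.
Arguments IP_pos {R V Ed ends p} hp s {st}.

Lemma two_le (T : finType) (X : {set T}) u w :
  u \in X -> w \in X -> u != w -> (2 <= #|X|)%N.
Proof.
move=> hu hw uw; have <- : #|[set u; w]| = 2%N by rewrite cards2 uw.
apply: subset_leq_card; apply/fintype.subsetP => z; rewrite !inE => /orP[]/eqP->//.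
Qed.

Lemma three_elems (T : finType) (A : {set T}) : (4 <= #|A|)%N ->
  exists e1 e2 e3, [/\ e1 \in A, e2 \in A & e3 \in A] /\ [/\ e1 != e2, e1 != e3 & e2 != e3].
Proof.
move=> H.
have /card_gt0P [e1 h1] : (0 < #|A|)%N by apply: leq_trans H.
move: H; rewrite (cardsD1 e1) h1 add1n ltnS => H.
have /card_gt0P [e2 h2] : (0 < #|A :\ e1|)%N by apply: leq_trans H.
move: H; rewrite (cardsD1 e2) h2 add1n ltnS => H.
have /card_gt0P [e3 h3] : (0 < #|A :\ e1 :\ e2|)%N by apply: leq_trans H.
move: h2 h3; rewrite !inE => /andP[n21 a2] /and3P[n32 n31 a3].
exists e1, e2, e3; split; split => //; by rewrite eq_sym.
Qed.

Section Graph.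
Variables (V Ed : finType) (ends : Ed -> V * V) (xb : V).
Hypothesis sg : simple_graph ends.

Definition star : {set Ed} := [set e : Ed | ((ends e).1 == xb) || ((ends e).2 == xb)].
Definition oth (e : Ed) : V := if (ends e).1 == xb then (ends e).2 else (ends e).1.

Lemma oth_neq e : e \in star -> oth e != xb.
Proof.
rewrite inE /oth; have := sg.1 e.
case: (ends e) => a b /=; have [->|ax] := eqVneq a xb => /=; first by rewrite eq_sym.
by move=> ab /eqP bx; rewrite -bx.
Qed.

Lemma delta_star (s : spin V) e : e \in star -> delta ends s e = (s xb == s (oth e)).
Proof.
rewrite inE /oth /delta; case: (ends e) => a b /=.
have [->|ax] := eqVneq a xb => //=.
by move=> /eqP->; rewrite eq_sym.
Qed.

Lemma oth_inj e e' : e \in star -> e' \in star -> oth e = oth e' -> e = e'.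
Proof.
move=> h h' E; apply: sg.2.
move: h h' E; rewrite !inE /oth.
case: (ends e) => a b; case: (ends e') => a' b' /=.
have [->|ax] := eqVneq a xb; have [->|ax'] := eqVneq a' xb;
  rewrite ?eqxx ?(negbTE ax) ?(negbTE ax') /=.
- by move=> _ _ ->; left.
- by move=> _ /eqP-> ->; right.
- by move=> /eqP-> _ ->; right.
- by move=> /eqP-> /eqP-> ->; left.
Qed.
End Graph.
Arguments star {V Ed}.
Arguments oth {V Ed}.
Arguments oth_neq {V Ed ends xb} sg {e}.
Arguments delta_star {V Ed ends xb} s {e}.
Arguments oth_inj {V Ed ends xb} sg {e e'}.


Theorem theorem4 (R : realType) (V Ed : finType) (ends : Ed -> V * V) (p : R)
  (q : edgeconf Ed * spin V -> edgeconf Ed * spin V -> R)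
  (c : spin V -> spin V -> R) :
  simple_graph ends ->
  0 < p < 1 ->
  (exists xb : V, 4 <= #|[set e : Ed | ((ends e).1 == xb) || ((ends e).2 == xb)]|)%N ->
  (exists sb : spin V, forall e : Ed, ~~ delta ends sb e) ->
  (forall s s', s != s' -> 0 <= q s s') ->
  (forall s, \sum_(s' : edgeconf Ed * spin V) q s s' = 0) ->
  (forall s s', IP ends p s * q s s' = IP ends p s' * q s' s) ->
  marginal_MJP_with_rates q (fun st => st.2) c ->
  (forall s s' : spin V, (2 <= #|[set y : V | s y != s' y]|)%N -> c s s' = 0) ->
  (forall (s : spin V) (x : V), 0 < c s (flip s x)) ->
  (forall s : spin V, c s s = - \sum_(y : V) c s (flip s y)) ->
  ~ marginal_is_MJP q (fun st => st.1).
Proof.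
move=> sg hp [xb Hxb] [sb Hsb] qpos _ DB HSm c2 cpos _ [c' HEm].
have S_ := @gen_lump R _ _ _ _ _ HSm.
have E_ := @gen_lump R _ _ _ _ _ HEm.
have L1 : forall s s', comp ends s -> ~~ comp ends s' -> q s s' = 0.
  move=> s s' hs hs'; have := DB s s'; rewrite (IP_0 hs') mul0r => /eqP.
  by rewrite mulf_eq0 (gt_eqF (IP_pos hp sb hs)) /= => /eqP.
have L2 : forall s s', comp ends s -> comp ends s' -> s != s' -> 0 < q s' s -> 0 < q s s'.
  move=> s s' hs hs' ss' h; rewrite lt_def qpos // andbT.
  apply/eqP => h0; have := DB s s'; rewrite h0 mulr0 => /esym/eqP.
  rewrite mulf_eq0 (gt_eqF (IP_pos hp sb hs')) /= => /eqP h1.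
  by rewrite h1 ltxx in h.
have [e1 [e2 [e3 [[a1 a2 a3] [n12 n13 n23]]]]] := three_elems _ _ Hxb.
have h1 : e1 \in star ends xb by [].
have h2 : e2 \in star ends xb by [].
have h3 : e3 \in star ends xb by [].
set y1 := oth ends xb e1; set y2 := oth ends xb e2; set y3 := oth ends xb e3.
have y1x : y1 != xb := oth_neq sg h1.
have y2x : y2 != xb := oth_neq sg h2.
have y3x : y3 != xb := oth_neq sg h3.
have ij : forall e e', e \in star ends xb -> e' \in star ends xb -> e != e' ->
    oth ends xb e != oth ends xb e'.
  by move=> e e' he he' ne; apply/eqP => /(oth_inj sg he he') /eqP; rewrite (negbTE ne).
have y12 := ij _ _ h1 h2 n12; have y13 := ij _ _ h1 h3 n13; have y23 := ij _ _ h2 h3 n23.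
pose eta0 : edgeconf Ed := [ffun _ => false].
pose etap : edgeconf Ed := [ffun e => (e == e1) || (e == e2) || (e == e3)].
pose s1 : spin V := flip sb xb.
have etan : etap != eta0.
  by apply/eqP => /ffunP /(_ e1); rewrite !ffunE eqxx.
have etap_star : forall e, etap e -> e \in star ends xb.
  by move=> e; rewrite ffunE => /orP[/orP[]|] /eqP->.
have comp0 : forall s, comp ends (eta0, s).
  by move=> s; apply/forallP => e /=; rewrite ffunE.
have compp : comp ends (etap, s1).
  apply/forallP => e /=; apply/implyP => he.
  have hs := etap_star e he.
  rewrite (delta_star (xb:=xb)) // /s1 /flip !ffunE eqxx (negbTE (oth_neq sg hs)).
  by move: (Hsb e); rewrite (delta_star (xb:=xb)) //; case: (sb xb); case: (sb _).
have ncompsb : forall eta, eta != eta0 -> ~~ comp ends (eta, sb).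
  move=> eta ne; apply/negP => /forallP H; move/eqP: ne; apply; apply/ffunP => e.
  rewrite ffunE; move: (H e) (Hsb e) => /=; case: (eta e) => //= d nd.
  by rewrite d in nd.
have s1sb : flip s1 xb = sb.
  by apply/ffunP => v; rewrite /s1 /flip !ffunE; case: eqP => [->|]; rewrite ?eqxx ?negbK.
have sbs1 : sb != s1.
  apply/eqP => /ffunP /(_ xb); rewrite /s1 /flip ffunE eqxx.
  by case: (sb xb).
have q1 : 0 < q (etap, s1) (eta0, sb).
  have := S_ (etap, s1) sb sbs1; rewrite /= -{2}s1sb.
  rewrite (bigD1 (eta0, sb)) //= big1 ?addr0.
    by move=> ->; apply: cpos.
  case=> a b /= /andP[/eqP bsb]; subst b; rewrite xpair_eqE eqxx andbT => ha.
  by apply: L1 => //; apply: ncompsb.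
have q2 : 0 < q (eta0, sb) (etap, s1).
  apply: L2 => //.
  by rewrite xpair_eqE negb_and eq_sym etan.
have cpos' : 0 < c' eta0 etap.
  have := E_ (eta0, sb) etap etan; rewrite /= => <-.
  rewrite (bigD1 (etap, s1)) //=; apply: (lt_le_trans q2); rewrite lerDl.
  apply: sumr_ge0 => -[a b] /= /andP[/eqP -> _]; apply: qpos.
  by rewrite xpair_eqE negb_and eq_sym etan.
pose sp : spin V := [ffun v => (v == xb) || (v == y1)].
have czero : c' eta0 etap = 0.
  have := E_ (eta0, sp) etap etan; rewrite /= => <-.
  apply: big1 => -[a b] /= /eqP ->.
  have [H2|H2] := leqP 2 #|[set y : V | sp y != b y]|.
    have bsp : b != sp.
      apply/eqP => bE; move: H2; rewrite bE.
      by rewrite (_ : [set y | sp y != sp y] = finset.set0) ?cards0 //; apply/setP => v; rewrite !inE eqxx.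
    have := S_ (eta0, sp) b bsp; rewrite /= (c2 _ _ H2) => H0.
    apply: (psumr_eq0P _ H0) => //.
    case=> a' b' /= /eqP ->; apply: qpos; rewrite xpair_eqE negb_and.
    by apply/orP; right; rewrite eq_sym.
  apply: L1 => //; apply/negP => /forallP Hc.
  have hb : forall e, etap e -> b xb = b (oth ends xb e).
    by move=> e he; move: (Hc e) => /=; rewrite he /= (delta_star (xb:=xb)) ?etap_star // => /eqP.
  have b1 : b xb = b y1 by apply: hb; rewrite ffunE eqxx.
  have b2 : b xb = b y2 by apply: hb; rewrite ffunE eqxx orbT.
  have b3 : b xb = b y3 by apply: hb; rewrite ffunE eqxx orbT.
  have spx : sp xb = true by rewrite ffunE eqxx.
  have sp1 : sp y1 = true by rewrite ffunE eqxx orbT.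
  have sp2 : sp y2 = false by rewrite ffunE (negbTE y2x) eq_sym (negbTE y12).
  have sp3 : sp y3 = false by rewrite ffunE (negbTE y3x) eq_sym (negbTE y13).
  have [u [hu uin]] : exists u, (u == xb) || (u == y2) /\ u \in [set y | sp y != b y].
    case E: (b xb).
      by exists y2; rewrite eqxx orbT inE sp2 -b2 E.
    by exists xb; rewrite eqxx inE spx E.
  have [w [hw win]] : exists w, (w == y1) || (w == y3) /\ w \in [set y | sp y != b y].
    case E: (b xb).
      by exists y3; rewrite eqxx orbT inE sp3 -b3 E.
    by exists y1; rewrite eqxx inE sp1 -b1 E.
  have uw : u != w.
    by move: hu hw => /orP[]/eqP-> /orP[]/eqP->; [rewrite eq_sym y1x | rewrite eq_sym y3x | rewrite eq_sym y12 | exact: y23].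
  by move: H2; rewrite ltnNge (@two_le _ _ _ _ uin win uw).
by rewrite czero ltxx in cpos'.
Qed.
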